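(* Let $R$ be an indecomposable commutative unital ring, $X$ a locally compact Hausdorff zero-dimensional space, and $S$ an inverse semigroup. If $\alpha=(\{D_s\}_{s\in S},\{\alpha_s\}_{s\in S})$ is an algebraic partial action of $S$ on $A_R(X)$ such that each ideal $D_s$ has local units, then there is a topological partial action $\theta=(\{X_s\}_{s\in S},\{\theta_s\}_{s\in S})$ of $S$ on $X$ such that $\alpha$ is the dual partial action of $\theta$.
   Context: $A_R(X)$ is the $R$-algebra of locally constant compactly supported functions $X\to R$ with pointwise operations. $R$ is indecomposable if its only idempotents are $0,1$. A ring has local units if every finite subset $F$ admits an idempotent $e$ with $r=er=re$ for $r\in F$. Inverse semigroups: $E(S)$ idempotents, $s\le t$ iff $s=ts^*s$; $\mathcal{I}(Z)$ is the inverse semigroup of partial bijections of a set $Z$; a partial homomorphism $\varphi$ satisfies $\varphi(s^* )=\varphi(s)^*$, $\varphi(s)\varphi(t)\le\varphi(st)$, $s\le t\Rightarrow\varphi(s)\le\varphi(t)$. An algebraic partial action of $S$ on an $R$-algebra $A$: ideals $D_s$, $R$-algebra isomorphisms $\alpha_s:D_{s^*}\to D_s$, $s\mapsto\alpha_s$ a partial homomorphism $S\to\mathcal{I}(A)$, and $A=\operatorname{span}_R\bigcup_{e\in E(S)}D_e$. A topological partial action of $S$ on $X$: open $X_s$, homeomorphisms $\theta_s:X_{s^*}\to X_s$, $s\mapsto\theta_s$ a partial homomorphism $S\to\mathcal{I}(X)$, $X=\bigcup_{e\in E(S)}X_e$. Its dual partial action on $A_R(X)$: $D_s=\{f:\operatorname{supp}f\subseteq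 X_s\}$, $\alpha_s(f)=f\circ\theta_{s^*}$ on $X_s$, extended by zero. *)

(* Defs.v *)
From HB Require Import structures.
From mathcomp Require Import all_boot all_order all_algebra.
From mathcomp Require Import all_classical all_reals topology.
Set Implicit Arguments.
Unset Strict Implicit.
Unset Printing Implicit Defensive.
Import Order.TTheory GRing.Theory.
Local Open Scope classical_set_scope.
Local Open Scope ring_scope.

Record inverse_semigroup := InverseSemigroup {
  is_carrier :> Type;
  imul : is_carrier -> is_carrier -> is_carrier;
  istar : is_carrier -> is_carrier;
  imulA : forall a b c, imul a (imul b c) = imul (imul a b) c;
  istar_inv1 : forall s, imul (imul s (istar s)) s = s;
  istar_inv2 : forall s, imul (imul (istar s) s) (istar s) = istar s;
  istar_uniq : forall s t, imul (imul s t) s = s -> imul (imul t s) t = t ->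
                 t = istar s
}.

Definition idempotent (S : inverse_semigroup) (e : S) := imul e e = e.

Definition is_le (S : inverse_semigroup) (s t : S) :=
  s = imul (imul t (istar s)) s.

(* A family s |-> phi s of partial bijections of Z, where phi s is given by
   a total function f s : Z -> Z restricted to the domain dom (s^star), with
   range dom s.  The three axioms of a partial homomorphism S -> I(Z):
   phi(s^star) = phi(s)^star, phi(s)phi(t) <= phi(st), s <= t -> phi(s) <= phi(t),
   together with the fact that phi(s) is a bijection dom(s^star) -> dom(s). *)
Definition partial_hom (S : inverse_semigroup) (Z : Type)
    (dom : S -> set Z) (f : S -> Z -> Z) : Prop :=
  [/\
      (forall s x, dom (istar s) x -> dom s (f s x)),
      (forall s x, dom (istar s) x -> f (istar s) (f s x) = x),
      (forall s y, dom s y -> dom (istar s) (f (istar s) y) /\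
                              f s (f (istar s) y) = y),
      (forall s t x, dom (istar t) x -> dom (istar s) (f t x) ->
          dom (istar (imul s t)) x /\ f (imul s t) x = f s (f t x)) &
      (forall s t, is_le s t ->
          (dom (istar s) `<=` dom (istar t)) /\
          (forall x, dom (istar s) x -> f s x = f t x))].

Definition locally_compact_space (X : topologicalType) : Prop :=
  forall x : X, exists K : set X, compact K /\ nbhs x K.

Definition zero_dim (X : topologicalType) : Prop :=
  forall (x : X) (U : set X), open U -> U x ->
    exists V : set X, [/\ clopen V, V x & V `<=` U].

Definition fsupp (X : Type) (R : pzRingType) (f : X -> R) : set X :=
  [set x | f x != 0].

Definition locally_constant (X : topologicalType) (T : Type) (f : X -> T) :=
  forall x : X, exists U : set X, [/\ open U, U x & forall y, U y -> f y = f x].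

Definition in_ARX (X : topologicalType) (R : pzRingType) (f : X -> R) : Prop :=
  locally_constant f /\ compact (closure (fsupp f)).

Definition indecomposable (R : pzRingType) : Prop :=
  forall r : R, r * r = r -> r = 0 \/ r = 1.

Definition is_ideal (X : topologicalType) (R : comNzRingType) (I : set (X -> R)) :=
  I `<=` @in_ARX X R /\
  [/\ I (fun _ => 0),
      (forall f g, I f -> I g -> I (fun x => f x + g x)),
      (forall f, I f -> I (fun x => - f x)),
      (forall r f, I f -> I (fun x => r * f x)) &
      (forall f g, I f -> in_ARX g -> I (fun x => f x * g x) /\ I (fun x => g x * f x))].

Definition has_local_units (X : Type) (R : pzRingType) (I : set (X -> R)) :=
  forall F : seq (X -> R), (forall r, r \in F -> I r) ->
    exists e, [/\ I e, (fun x => e x * e x) = e &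
       forall r, r \in F -> (fun x => e x * r x) = r /\ (fun x => r x * e x) = r].

Definition alg_hom_on (X : Type) (R : pzRingType) (D : set (X -> R))
    (a : (X -> R) -> (X -> R)) :=
  [/\ (forall f g, D f -> D g -> a (fun x => f x + g x) = (fun x => a f x + a g x)),
      (forall f g, D f -> D g -> a (fun x => f x * g x) = (fun x => a f x * a g x)) &
      (forall r f, D f -> a (fun x => r * f x) = (fun x => r * a f x))].

Definition alg_partial_action (S : inverse_semigroup) (X : topologicalType)
    (R : comNzRingType) (D : S -> set (X -> R)) (a : S -> (X -> R) -> (X -> R)) :=
  [/\ (forall s, is_ideal (D s)),
      (forall s, alg_hom_on (D (istar s)) (a s)),
      partial_hom D a &
      (forall f, in_ARX f -> exists n (c : 'I_n -> R) (g : 'I_n -> X -> R)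
                                    (e : 'I_n -> S),
          (forall i, idempotent (e i) /\ D (e i) (g i)) /\
          f = (fun x => \sum_(i < n) c i * g i x))].

Definition top_partial_action (S : inverse_semigroup) (X : topologicalType)
    (U : S -> set X) (th : S -> X -> X) :=
  [/\ (forall s, open (U s)),
      (forall s, {within U (istar s), continuous (th s)}),
      partial_hom U th &
      (forall x : X, exists e : S, idempotent e /\ U e x)].

Definition dual_dom (S : inverse_semigroup) (X : topologicalType) (R : pzRingType)
    (U : S -> set X) (s : S) : set (X -> R) :=
  [set f | in_ARX f /\ fsupp f `<=` U s].

Definition dual_map (S : inverse_semigroup) (X : topologicalType) (R : pzRingType)
    (U : S -> set X) (th : S -> X -> X) (s : S) (f : X -> R) : X -> R :=
  fun x => if `[< U s x >] then f (th (istar s) x) else 0.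

(* Main.v *)
Require Import Defs.
From HB Require Import structures.
From mathcomp Require Import all_boot all_order all_algebra.
From mathcomp Require Import all_classical all_reals topology.
Local Open Scope classical_set_scope.
Local Open Scope ring_scope.
Import GRing.Theory.

Section Topo.
Variables (R : comNzRingType) (X : topologicalType).
Hypotheses (Rind : indecomposable R) (lcX : locally_compact_space X)
  (hX : hausdorff_space X) (zdX : zero_dim X).

Definition ind (L : set X) : X -> R := fun x => if `[< L x >] then 1 else 0.
Definition cpo (L : set X) := compact L /\ open L.

Lemma ind_in {L x} : L x -> ind L x = 1.
Proof. by move=> h; rewrite /ind asboolT. Qed.
Lemma ind_out {L x} : ~ L x -> ind L x = 0.
Proof. by move=> h; rewrite /ind asboolF. Qed.


Lemma ind_eq1 L x : ind L x = 1 -> L x.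
Proof.
case: (pselect (L x)) => // nL; rewrite ind_out // => /eqP.
by rewrite eq_sym oner_eq0.
Qed.

Lemma fsupp_ind L : fsupp (ind L) = L.
Proof.
apply/seteqP; split => x; rewrite /fsupp /=.
  by case: (pselect (L x)) => // nL; rewrite ind_out ?eqxx.
by move=> Lx; rewrite ind_in // oner_eq0.
Qed.

Lemma indM L L' : (fun x => ind L x * ind L' x) = ind (L `&` L').
Proof.
apply/funext => x; case: (pselect (L x)) => h.
  case: (pselect (L' x)) => h'.
    by rewrite !ind_in ?mulr1.
  by rewrite (ind_out h') (@ind_out (L `&` L')) ?mulr0 // => -[].
by rewrite (ind_out h) (@ind_out (L `&` L')) ?mul0r // => -[].
Qed.

Lemma lc_open_pred (f : X -> R) (P : R -> Prop) :
  locally_constant f -> open [set x | P (f x)].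
Proof.
move=> lcf; rewrite openE => x Px.
have [U [oU Ux fU]] := lcf x.
apply: (@filterS _ _ _ U); last exact: open_nbhs_nbhs.
by move=> y Uy /=; rewrite fU.
Qed.

Lemma lc_closed_pred (f : X -> R) (P : R -> Prop) :
  locally_constant f -> closed [set x | P (f x)].
Proof.
move=> lcf.
have -> : [set x | P (f x)] = ~` [set x | ~ P (f x)].
  by apply/seteqP; split => x /=; rewrite notK.
exact: open_closedC (@lc_open_pred f (fun r => ~ P r) lcf).
Qed.

Lemma fsupp_open (f : X -> R) : locally_constant f -> open (fsupp f).
Proof. by move=> lcf; apply: (@lc_open_pred f (fun r => r != 0)). Qed.

Lemma fsupp_closed (f : X -> R) : locally_constant f -> closed (fsupp f).
Proof. by move=> lcf; apply: (@lc_closed_pred f (fun r => r != 0)). Qed.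

Lemma ARX_cpo {f : X -> R} : in_ARX f -> cpo (fsupp f).
Proof.
move=> [lcf cf]; split; last exact: fsupp_open.
by rewrite ((closure_id (fsupp f)).1 (fsupp_closed _ lcf)).
Qed.

Lemma cpo_closed L : cpo L -> closed L.
Proof. by move=> [cL _]; exact: compact_closed. Qed.

Lemma cpoI L M : cpo L -> closed M -> open M -> cpo (L `&` M).
Proof.
move=> cL cM oM; split; last exact: openI cL.2 oM.
apply: (subclosed_compact _ cL.1) => //.
by apply: closedI => //; exact: cpo_closed.
Qed.

Lemma ind_ARX L : cpo L -> in_ARX (ind L).
Proof.
move=> cL; split; last by rewrite fsupp_ind -((closure_id L).1 (cpo_closed _ cL)); exact: cL.1.
move=> x; case: (pselect (L x)) => h.
  by exists L; split; [exact: cL.2 | exact: h | move=> y Ly; rewrite !ind_in].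
exists (~` L); split; [exact: closed_openC (cpo_closed _ cL) | exact: h | ].
by move=> y Ly; rewrite !ind_out.
Qed.

Lemma cpo_basis x W : open W -> W x -> exists L, [/\ cpo L, L x & L `<=` W].
Proof.
move=> oW Wx.
have [K [cK]] := lcX x; rewrite nbhsE => -[O [oO Ox] OK].
have [V [[oV clV] Vx VWO]] := zdX x (W `&` O) (openI oW oO) (conj Wx Ox).
exists V; split => //; last by move=> y /VWO [].
split => //; apply: (subclosed_compact clV cK) => y /VWO [_ /OK].
by [].
Qed.

Lemma sep_pts (x z : X) : x <> z -> exists W, [/\ open W, W x & ~ W z].
Proof.
move=> /eqP xz; have [A [oA xA zA]] := hausdorff_accessible hX xz.
by exists A; split => //; [rewrite -in_setE | move: zA; rewrite in_setE].
Qed.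


Lemma idem_fun {e : X -> R} : (fun x => e x * e x) = e -> forall x, e x = 0 \/ e x = 1.
Proof. by move=> he x; apply: Rind; exact: (congr1 (fun h => h x) he). Qed.

Section Ideal.
Variables (I : set (X -> R)) (hI : is_ideal I) (hlu : has_local_units I).

Definition supp_of : set X := [set x | exists g, I g /\ g x != 0].

Lemma ideal_ARX {f} : I f -> in_ARX f.
Proof. by move=> If; exact: hI.1. Qed.

Lemma ideal_mul f g : I f -> in_ARX g -> I (fun x => f x * g x).
Proof. by move=> If Ag; case: hI => _ [_ _ _ _ h]; exact: (h f g If Ag).1. Qed.

Lemma ideal_mulr f g : I f -> in_ARX g -> I (fun x => g x * f x).
Proof. by move=> If Ag; case: hI => _ [_ _ _ _ h]; exact: (h f g If Ag).2. Qed.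

Lemma supp_of_open : open supp_of.
Proof.
rewrite openE => x [g [Ig gx]].
apply: (@filterS _ _ _ (fsupp g)); first by move=> y gy; exists g.
apply: open_nbhs_nbhs; split => //.
by apply: fsupp_open; case: (ideal_ARX Ig).
Qed.

Lemma ideal_dual : I = [set f | in_ARX f /\ fsupp f `<=` supp_of].
Proof.
apply/seteqP; split => f /=.
  by move=> If; split; [exact: ideal_ARX | move=> x fx; exists f].
move=> [Af sub].
have [cC oC] := ARX_cpo Af.
pose cov (gs : seq (X -> R)) := [set x | exists2 g, g \in gs & g x != 0].
have [gs [Igs Cgs]] : exists gs : seq (X -> R),
    (forall g, g \in gs -> I g) /\ fsupp f `<=` cov gs.
  apply: contrapT => nH.
  pose F := filter_from [set gs : seq (X -> R) | forall g, g \in gs -> I g]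
              (fun gs => fsupp f `\` cov gs).
  have Ffil : Filter F.
    apply: filter_from_filter; first by exists [::].
    move=> i j Ii Ij; exists (i ++ j).
      by move=> g; rewrite mem_cat => /orP [/Ii|/Ij].
    move=> x [Cx ncov]; split; split => // -[g gi gx]; apply: ncov;
      by exists g => //; rewrite mem_cat gi ?orbT.
  have Fpro : ProperFilter F.
    apply: filter_from_proper => // gs Igs.
    apply: contrapT => ne; apply: nH; exists gs; split => // x Cx.
    apply: contrapT => nc; apply: ne; by exists x.
  have FC : F (fsupp f) by exists [::] => // x [].
  have [x [Cx clx]] := cC F Fpro FC.
  have [g [Ig gx]] := sub x Cx.
  have Fg : F (fsupp f `\` cov [:: g]).
    by exists [:: g] => // h; rewrite mem_seq1 => /eqP ->.
  have ng : nbhs x (fsupp g).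
    apply: open_nbhs_nbhs; split => //.
    by apply: fsupp_open; case: (ideal_ARX Ig).
  have [z [[_ nz] gz]] := clx _ _ Fg ng.
  by apply: nz; exists g => //; rewrite mem_seq1.
have [e [Ie ee he]] := hlu gs Igs.
have -> : f = (fun x => e x * f x).
  apply/funext => x; case: (eqVneq (f x) 0) => [->|fx]; first by rewrite mulr0.
  have [g gi gx] := Cgs x fx.
  have := congr1 (fun h => h x) (he g gi).1 => /= egx.
  case: (idem_fun ee x) => ex; last by rewrite ex mul1r.
  by move: egx gx; rewrite ex mul0r => <-; rewrite eqxx.
exact: ideal_mul.
Qed.

Lemma ideal_ind L : cpo L -> L `<=` supp_of -> I (ind L).
Proof.
move=> cL LU; rewrite ideal_dual; split; first exact: ind_ARX.
by rewrite fsupp_ind.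
Qed.


Lemma ideal0 : I (fun _ => 0).
Proof. by case: hI => _ []. Qed.

Lemma character (chi : (X -> R) -> R) :
  (forall f g, I f -> I g -> chi (fun x => f x + g x) = chi f + chi g) ->
  (forall f g, I f -> I g -> chi (fun x => f x * g x) = chi f * chi g) ->
  (forall r f, I f -> chi (fun x => r * f x) = r * chi f) ->
  (exists g, I g /\ chi g != 0) ->
  exists y, supp_of y /\ forall g, I g -> chi g = g y.
Proof.
move=> chiD chiM chiZ [g0 [Ig0 chig0]].
have chi0 : chi (fun _ => 0) = 0.
  have h := chiZ 0 _ ideal0.
  have e0 : (fun x : X => (0:R) * 0) = (fun _ => 0) by apply/funext=> x; rewrite mul0r.
  by rewrite e0 mul0r in h.
have Ig0s : forall g, g \in [:: g0] -> I g by move=> g; rewrite mem_seq1 => /eqP ->.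
have [e [Ie ee he]] := hlu [:: g0] Ig0s.
have eg0 := (he g0 (mem_head _ _)).1.
have chie : chi e = 1.
  have h1 : chi e * chi e = chi e by rewrite -chiM // ee.
  case: (Rind _ h1) => // h0.
  move: chig0; rewrite -eg0 chiM // h0 mul0r eqxx //.
pose K := fsupp e.
have eK : e = ind K.
  apply/funext => x; rewrite /ind /K /fsupp /=.
  case: (idem_fun ee x) => ->; first by rewrite asboolF // eqxx.
  by rewrite asboolT // oner_eq0.
have cK : cpo K := ARX_cpo (ideal_ARX Ie).
have KU : K `<=` supp_of by move=> x Kx; exists e.
have Iind L : cpo L -> L `<=` K -> I (ind L).
  by move=> cL LK; apply: ideal_ind => // x /LK /KU.
have chi_idem L : cpo L -> L `<=` supp_of -> chi (ind L) = 0 \/ chi (ind L) = 1.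
  move=> cL LU; apply: Rind; rewrite -chiM; try exact: ideal_ind.
  by rewrite indM setIid.
pose D := [set L | [/\ cpo L, L `<=` K & chi (ind L) = 1]].
pose F := filter_from D id.
have Ffil : Filter F.
  apply: filter_from_filter; first by exists K; split => //; rewrite -eK.
  move=> L1 L2 [c1 s1 h1] [c2 s2 h2]; exists (L1 `&` L2) => //; split.
  - by apply: cpoI => //; [exact: cpo_closed | exact: c2.2].
  - by move=> x [/s1].
  - by rewrite -indM chiM ?h1 ?h2 ?mulr1 //; apply: Iind.
have Fpro : ProperFilter F.
  apply: filter_from_proper => // L [cL sL hL].
  apply: contrapT => nL; move: hL.
  have -> : ind L = (fun _ => 0).
    by apply/funext => x; rewrite ind_out // => Lx; apply: nL; exists x.
  by rewrite chi0 => /eqP; rewrite eq_sym oner_eq0.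
have FK : F K by exists K => //; split => //; rewrite -eK.
have [y [Ky cly]] := cK.1 F Fpro FK.
have clA L : cpo L -> L `<=` K -> chi (ind L) = 1 -> L y.
  move=> cL LK hL; apply: contrapT => nLy.
  have FL : F L by exists L.
  have nb : nbhs y (~` L).
    by apply: open_nbhs_nbhs; split => //; exact: closed_openC (cpo_closed _ cL).
  by have [z [Lz nLz]] := cly _ _ FL nb.
have clB L : cpo L -> L `<=` supp_of -> L y -> chi (ind L) = 1.
  move=> cL LU Ly.
  case: (chi_idem L cL LU) => // h0.
  have cL2 : cpo (K `&` ~` L).
    apply: cpoI => //; first exact: open_closedC cL.2.
    exact: closed_openC (cpo_closed _ cL).
  have cL1 : cpo (K `&` L) by apply: cpoI => //; [exact: cpo_closed | exact: cL.2].
  have split : ind K = (fun x => ind (K `&` L) x + ind (K `&` ~` L) x).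
    apply/funext => x; case: (pselect (K x)) => kx; last first.
      by rewrite !ind_out ?addr0 // => -[].
    case: (pselect (L x)) => lx.
      rewrite (@ind_in K) // (@ind_in (K `&` L)) // (@ind_out (K `&` ~` L)) ?addr0 //.
      by move=> -[].
    rewrite (@ind_in K) // (@ind_out (K `&` L)) ?(@ind_in (K `&` ~` L)) ?add0r //.
    by move=> -[].
  have h1 : chi (ind (K `&` L)) = 0.
    by rewrite -indM chiM ?h0 ?mulr0 //; [rewrite -eK | exact: ideal_ind].
  have h2 : chi (ind (K `&` ~` L)) = 1.
    by move: chie; rewrite eK split chiD ?h1 ?add0r //; apply: Iind => // x [].
  have sub2 : K `&` ~` L `<=` K by move=> x [].
  by have [] := clA _ cL2 sub2 h2.
exists y; split; first exact: KU.
move=> g Ig.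
have lcg : locally_constant g by case: (ideal_ARX Ig).
pose M := K `&` [set x | g x = g y].
have cM : cpo M.
  apply: cpoI => //; first exact: (@lc_closed_pred g (fun r => r = g y)).
  exact: (@lc_open_pred g (fun r => r = g y)).
have hM : chi (ind M) = 1 by apply: clB => // x [/KU].
have eq : (fun x => g x * ind M x) = (fun x => g y * ind M x).
  apply/funext => x; case: (pselect (M x)) => mx.
    by case: (mx) => _ /= ->.
  by rewrite ind_out // !mulr0.
have IM : I (ind M) by apply: Iind => // x [].
have := congr1 chi eq; rewrite chiM // chiZ // hM !mulr1 => ->.
by [].
Qed.

End Ideal.
End Topo.
Arguments ind_in {R X L x}.
Arguments ind_out {R X L x}.
Arguments sep_pts {X} hX {x z}.
Arguments cpo_basis {X} lcX zdX {x W}.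
Arguments character {R X} Rind hX {I}.
Arguments ideal_ind {R X} Rind hX {I} hI hlu {L}.
Arguments ideal_dual {R X} Rind {I}.
Arguments supp_of_open {R X I}.
Arguments ideal_mul {R X I} hI {f g}.
Arguments ideal_mulr {R X I} hI {f g}.
Arguments ideal_ARX {R X I} hI {f}.
Arguments ind_ARX {R X} hX {L}.
Arguments ARX_cpo {R X f}.
Arguments indM {R X}.

Lemma starK (S : inverse_semigroup) (s : S) : istar (istar s) = s.
Proof. by symmetry; apply: istar_uniq; [exact: istar_inv2 | exact: istar_inv1]. Qed.

Section Main.
Variables (R : comNzRingType) (X : topologicalType) (S : inverse_semigroup)
  (D : S -> set (X -> R)) (a : S -> (X -> R) -> (X -> R)).
Hypotheses (Rind : indecomposable R) (lcX : locally_compact_space X)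
  (hX : hausdorff_space X) (zdX : zero_dim X)
  (Hpa : alg_partial_action D a) (Hlu : forall s, has_local_units (D s)).

Let Hid : forall s, is_ideal (D s). Proof. by case: Hpa. Qed.
Let Hhom : forall s, alg_hom_on (D (istar s)) (a s). Proof. by case: Hpa. Qed.
Let P1 : forall s f, D (istar s) f -> D s (a s f).
Proof. by case: Hpa => _ _ [] . Qed.
Let P2 : forall s f, D (istar s) f -> a (istar s) (a s f) = f.
Proof. by case: Hpa => _ _ []. Qed.
Let P3 : forall s f, D s f -> a s (a (istar s) f) = f.
Proof. by case: Hpa => _ _ [_ _ h _ _] _ s f Df; exact: (h s f Df).2. Qed.
Let P4 : forall s t f, D (istar t) f -> D (istar s) (a t f) ->
          D (istar (imul s t)) f /\ a (imul s t) f = a s (a t f).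
Proof. by case: Hpa => _ _ []. Qed.
Let P5 : forall s t, is_le s t ->
          (D (istar s) `<=` D (istar t)) /\
          (forall f, D (istar s) f -> a s f = a t f).
Proof. by case: Hpa => _ _ []. Qed.

Definition U s := supp_of R X (D s).
Definition th s (x : X) : X :=
  xget x [set y | U s y /\ forall g, D s g -> a (istar s) g x = g y].

Lemma th_spec {s x} : U (istar s) x ->
  U s (th s x) /\ (forall g, D s g -> a (istar s) g x = g (th s x)).
Proof.
move=> Ux.
suff ex : exists y, U s y /\ forall g, D s g -> a (istar s) g x = g y.
  exact: (xgetPex x ex).
have hom := Hhom (istar s); rewrite starK in hom.
case: hom => hD hM hZ.
apply: (character Rind hX (Hid s) (Hlu s) (fun g => a (istar s) g x)).
- by move=> f g Df Dg /=; rewrite hD.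
- by move=> f g Df Dg /=; rewrite hM.
- by move=> r f Df /=; rewrite hZ.
- case: Ux => h [Dh hx]; exists (a s h); split; first exact: P1.
  by rewrite /= P2.
Qed.

Lemma sepD {u x z} : U u x -> (forall g, D u g -> g x = g z) -> x = z.
Proof.
move=> Ux hg; apply: contrapT => xz.
have [W [oW Wx nWz]] := sep_pts hX xz.
have [L [cL Lx LW]] := cpo_basis lcX zdX (openI oW (supp_of_open (Hid u))) (conj Wx Ux).
have LU : L `<=` U u by move=> y /LW [].
have := hg _ (ideal_ind Rind hX (Hid u) (Hlu u) cL LU).
rewrite (ind_in Lx) ind_out; last by move=> /LW [].
by move/eqP; rewrite oner_eq0.
Qed.

Lemma dual_rel {u w f} : U u w -> D (istar u) f -> a u f w = f (th (istar u) w).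
Proof.
move=> Uw Df; have := @th_spec (istar u) w; rewrite starK => /(_ Uw) [_ h].
exact: h.
Qed.

Lemma th_inv {s x} : U (istar s) x -> th (istar s) (th s x) = x.
Proof.
move=> Ux; have [Uy hy] := th_spec Ux.
symmetry; apply: (sepD Ux) => f Df.
rewrite -{1}(P2 _ _ Df) hy; last exact: P1.
exact: dual_rel.
Qed.


Lemma th_comp s t x : U (istar t) x -> U (istar s) (th t x) ->
  U (istar (imul s t)) x /\ th (imul s t) x = th s (th t x).
Proof.
move=> Ux Uy.
have [Uty hy] := th_spec Ux.
have [Usz hz] := th_spec Uy.
have [L [cL Ly LUU]] := cpo_basis lcX zdX
  (openI (supp_of_open (Hid t)) (supp_of_open (Hid (istar s)))) (conj Uty Uy).
pose m := ind R X L.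
have Dtm : D t m.
  by apply: (ideal_ind Rind hX (Hid t) (Hlu t) cL) => w /LUU [].
have Dsm : D (istar s) m.
  by apply: (ideal_ind Rind hX (Hid _) (Hlu _) cL) => w /LUU [].
have my : m (th t x) = 1 by rewrite /m (ind_in Ly).
pose k := a (istar t) m.
have Dk : D (istar t) k by apply: P1; rewrite starK.
have kx : k x = 1 by rewrite /k hy.
have atk : a t k = m := P3 _ _ Dtm.
have [Dstk _] := P4 s t k Dk (eq_ind_r (D (istar s)) Dsm atk).
have Ustx : U (istar (imul s t)) x.
  by exists k; split => //; rewrite kx oner_eq0.
split => //.
apply: contrapT => wz.
have [Uw hw] := th_spec Ustx.
have zw : th s (th t x) <> th (imul s t) x by move=> e; apply: wz; rewrite e.
have [W [oW Wz nWw]] := sep_pts hX zw.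
have [L' [cL' L'z L'W]] := cpo_basis lcX zdX (openI oW (supp_of_open (Hid s))) (conj Wz Usz).
have DL' : D s (ind R X L').
  by apply: (ideal_ind Rind hX (Hid s) (Hlu s) cL') => w /L'W [].
pose h := a (istar s) (ind R X L').
have Dh : D (istar s) h by apply: P1; rewrite starK.
have hy1 : h (th t x) = 1 by rewrite /h hz // (ind_in L'z).
pose p := fun x => h x * m x.
have Dps : D (istar s) p := ideal_mul (Hid _) Dh (ideal_ARX (Hid t) Dtm).
have Dpt : D t p := ideal_mulr (Hid t) Dtm (ideal_ARX (Hid _) Dh).
pose f := a (istar t) p.
have Df : D (istar t) f by apply: P1; rewrite starK.
have atf : a t f = p := P3 _ _ Dpt.
have [Dstf eq] := P4 s t f Df (eq_ind_r (D (istar s)) Dps atf).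
have e1 : a (imul s t) f (th (imul s t) x) = 1.
  by rewrite (dual_rel Uw Dstf) (th_inv Ustx) /f hy // /p hy1 my mulr1.
have e0 : a (imul s t) f (th (imul s t) x) = 0.
  rewrite eq atf; case: (Hhom s) => _ hM _.
  rewrite (hM _ _ Dh Dsm) /= /h (P3 _ _ DL') ind_out ?mul0r //.
  by move=> /L'W [].
by move: e1; rewrite e0 => /eqP; rewrite eq_sym oner_eq0.
Qed.

Lemma th_le s t x : is_le s t -> U (istar s) x -> th s x = th t x.
Proof.
move=> le Ux; have [sub eqa] := P5 _ _ le.
have Utx : U (istar t) x.
  by case: Ux => g [Dg gx]; exists g; split => //; exact: sub.
have [Usy _] := th_spec Ux.
have [Uty _] := th_spec Utx.
apply: (sepD Usy) => g Dg.
pose f := a (istar s) g.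
have Df : D (istar s) f by apply: P1; rewrite starK.
rewrite -(P3 _ _ Dg) -/f {2}(eqa f Df) (dual_rel Usy Df) (th_inv Ux).
by rewrite (dual_rel Uty (sub _ Df)) (th_inv Utx).
Qed.

Lemma th_cont s : {within U (istar s), continuous (th s)}.
Proof.
rewrite continuous_open_subspace; last exact: (supp_of_open (Hid _)).
move=> x; rewrite inE => Ux.
have [Uy hy] := th_spec Ux.
move=> B; rewrite nbhsE => -[O [oO Oy] OB].
have [L [cL Ly LO]] := cpo_basis lcX zdX (openI oO (supp_of_open (Hid s))) (conj Oy Uy).
have DL : D s (ind R X L).
  by apply: (ideal_ind Rind hX (Hid s) (Hlu s) cL) => w /LO [].
pose h := a (istar s) (ind R X L).
have Dh : D (istar s) h by apply: P1; rewrite starK.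
have hx : h x = 1 by rewrite /h hy // (ind_in Ly).
have [N [oN Nx hN]] := (ideal_ARX (Hid _) Dh).1 x.
rewrite nbhsE; exists (N `&` U (istar s)).
  by split; [exact: (openI oN (supp_of_open (Hid _))) | split].
move=> z [Nz Uz]; have [_ hz] := th_spec Uz.
have : h z = 1 by rewrite hN.
rewrite /h hz // => /ind_eq1 /LO [] /OB.
by [].
Qed.

Lemma cover (x : X) : exists e : S, Defs.idempotent e /\ U e x.
Proof.
have [L [cL Lx _]] := cpo_basis lcX zdX (x:=x) (W:=setT) openT Logic.I.
case: Hpa => _ _ _ Hspan.
have [n [c [g [e [he eq]]]]] := Hspan _ (ind_ARX hX cL).
have := congr1 (fun f => f x) eq; rewrite /= (ind_in Lx) => h1.
apply: contrapT => nex.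
have : \sum_(i < n) c i * g i x = 0.
  apply: big1 => i _; have [ide Dg] := he i.
  case: (eqVneq (g i x) 0) => [->|gx]; first by rewrite mulr0.
  by exfalso; apply: nex; exists (e i); split => //; exists (g i); split.
by rewrite -h1 => /eqP; rewrite oner_eq0.
Qed.

Lemma main_sec : exists (U : S -> set X) (th : S -> X -> X),
    top_partial_action U th /\
    (forall s, D s = @dual_dom S X R U s) /\
    (forall s f, D (istar s) f -> a s f = dual_map U th s f).
Proof.
exists U, th; split; last split.
- split.
  + by move=> s; exact: (supp_of_open (Hid _)).
  + by move=> s; exact: th_cont.
  + split.
    * by move=> s x Ux; exact: (th_spec Ux).1.
    * by move=> s x Ux; exact: th_inv.
    * move=> s y Uy.
      have Uy' : U (istar (istar s)) y by rewrite starK.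
      split; first exact: (th_spec Uy').1.
      by have := th_inv Uy'; rewrite starK.
    * by move=> s t x Ux Uy; exact: th_comp.
    * move=> s t le; split; last by move=> x Ux; exact: th_le.
      have [sub _] := P5 _ _ le.
      by move=> x [g [Dg gx]]; exists g; split => //; exact: sub.
  + exact: cover.
- by move=> s; rewrite {1}(ideal_dual Rind (Hid s) (Hlu s)).
- move=> s f Df; apply/funext => x; rewrite /dual_map.
  case: (pselect (U s x)) => Ux; first by rewrite asboolT // (dual_rel Ux Df).
  rewrite asboolF //; apply: contrapT => nz; apply: Ux.
  by exists (a s f); split; [exact: P1 | apply/eqP].
Qed.

End Main.

Theorem proposition6p4 (R : comNzRingType) (X : topologicalType)
    (S : inverse_semigroup)
    (D : S -> set (X -> R)) (a : S -> (X -> R) -> (X -> R)) :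
  indecomposable R ->
  locally_compact_space X -> hausdorff_space X -> zero_dim X ->
  alg_partial_action D a ->
  (forall s, has_local_units (D s)) ->
  exists (U : S -> set X) (th : S -> X -> X),
    top_partial_action U th /\
    (forall s, D s = @dual_dom S X R U s) /\
    (forall s f, D (istar s) f -> a s f = dual_map U th s f).
Proof. by move=> *; apply: main_sec. Qed.
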